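(* Let $\mathcal{G}_\mu=(\mathcal{V}_\mu,\mathcal{E}_\mu)$ be a connected undirected graph on the finite node set $\mathcal{V}_\mu=\{1,\dots,V_\mu\}$ (each node is a distributed generator, DG), with symmetric binary adjacency matrix $\mathcal{A}_\mu=[a_{ij}]$ ($a_{ii}=0$, $a_{ij}=a_{ji}=1$ iff $(i,j)\in\mathcal{E}_\mu$). For $i\in\mathcal{V}_\mu$ let $\mathcal{E}_{\mu,i}$ be the set of edges incident to $i$, so $|\mathcal{E}_{\mu,i}|$ is the degree of node $i$. Fix reference values $x_{\omega,ref},x_{U,ref}\in\mathbb{R}$ and control gains $K_{\omega i},K_{Pi},K_{Ui}>0$. Consider the discrete-time system, for $k\ge 0$ and each $i\in\mathcal{V}_\mu$, \[ x_{\omega i}(k+1)=x_{\omega i}(k)+u_{\omega i}(k),\quad x_{Pi}(k+1)=x_{Pi}(k)+u_{Pi}(k),\quad x_{Ui}(k+1)=x_{Ui}(k)+u_{Ui}(k), \] with the controls \[ u_{\omega i}(k)=K_{\omega i}\big(x_{\omega,ref}-x_{\omega i}(k)\big),\qquad u_{Pi}(k)=K_{Pi}\sum_{j:(i,j)\in\mathcal{E}_{\mu}} a_{ij}\big(x_{Pj}(k-1)-x_{Pi}(k)\big),\qquad u_{Ui}(k)=K_{Ui}\big(x_{U,ref}-x_{Ui}(k)\big), \] and arbitrary initial values (including $x_P(-1)$). Here $x_{\omega i}=\omega_i$ is the angular frequency of DG $i$, $x_{Pi}=m_{Pi}P_i$ its droop-scaled active power output, and $x_{Ui}=U_i$ its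 voltage magnitude, where the droop coefficients satisfy $m_{Pi}P_{\max,i}=m_{Pj}P_{\max,j}$ for all $i,j$, with $P_{\max,i}>0$ the active power rating of DG $i$. If \[ 0<K_{\omega i}<2,\quad 0<K_{Ui}<2,\quad 0<|\mathcal{E}_{\mu,i}|\,K_{Pi}<1\qquad\text{for all } i\in\mathcal{V}_\mu, \] then, as $k\to\infty$, $\omega_i(k)\to x_{\omega,ref}$, $U_i(k)\to x_{U,ref}$, and $\big|P_i(k)/P_{\max,i}-P_j(k)/P_{\max,j}\big|\to 0$ (equivalently $|x_{Pi}(k)-x_{Pj}(k)|\to0$) for all $i,j\in\mathcal{V}_\mu$; i.e., frequency regulation, active power sharing and voltage regulation are achieved asymptotically.
   Context: This models distributed secondary control of an islanded microgrid in which each DG runs droop control $\omega_i=\omega_{ni}-m_{Pi}P_i$, $U_i=U_{ni}-n_{Qi}Q_i$, and the set points are updated every sampling interval $T_s$ chosen no smaller than the maximal communication delay, so that neighbours' power information arrives with exactly one step of delay (the term $x_{Pj}(k-1)$). The delayed neighbour exchange takes place over the undirected communication graph $\mathcal{G}_\mu$. *)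

(* Defs.v *)
From HB Require Import structures.
From mathcomp Require Import all_boot all_order all_algebra.
From mathcomp Require Import all_classical all_reals all_analysis.
Set Implicit Arguments. Unset Strict Implicit. Unset Printing Implicit Defensive.
Import Order.TTheory GRing.Theory Num.Theory.
Local Open Scope ring_scope.

(* The communication graph G_mu on node set 'I_n, given by its edge relation
   e (e i j <-> a_ij = 1). *)
Definition undirected_graph (n : nat) (e : rel 'I_n) : Prop :=
  symmetric e /\ irreflexive e.

Definition connected_graph (n : nat) (e : rel 'I_n) : Prop :=
  forall i j : 'I_n, connect e i j.

Definition degree (n : nat) (e : rel 'I_n) (i : 'I_n) : nat :=
  #|[pred j | e i j]|.

(* Delayed power value: x_P(k-1), where xPm1 is the initial value x_P(-1)
   and xP k is x_P(k) for k >= 0. *)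
Definition xP_prev (R : Type) (n : nat) (xPm1 : 'I_n -> R)
  (xP : nat -> 'I_n -> R) (k : nat) : 'I_n -> R :=
  match k with
  | 0 => xPm1
  | k'.+1 => xP k'
  end.

(* Main.v *)
Require Import Defs.
From HB Require Import structures.
From mathcomp Require Import all_boot all_order all_algebra.
From mathcomp Require Import all_classical all_reals all_analysis.
From mathcomp Require Import zify ring lra.
Import Order.TTheory GRing.Theory Num.Theory.
Import numFieldNormedType.Exports.
Local Open Scope classical_set_scope.
Local Open Scope ring_scope.
Set Implicit Arguments. Unset Strict Implicit.

Lemma cvg0_of (R : realType) (f : nat -> R) :
  (forall eps, 0 < eps -> exists N, forall k, (N <= k)%N -> `|f k| < eps) ->
  f @ \oo --> 0.
Proof.
move=> H; apply/cvgrPdist_lt => eps eps0.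
have [N HN] := H eps eps0.
exists N => // k /= Hk; rewrite sub0r normrN; exact: HN.
Qed.

Lemma ev_of (R : realType) (f : nat -> R) : f @ \oo --> 0 ->
  forall eps, 0 < eps -> exists N, forall k, (N <= k)%N -> `|f k| < eps.
Proof.
move=> /cvgrPdist_lt H eps eps0.
have [N _ HN] := H eps eps0.
exists N => k Hk; have := HN k Hk; by rewrite /= sub0r normrN.
Qed.

Lemma geo_small (R : realType) (q W eps : R) : `|q| < 1 -> 0 <= W -> 0 < eps ->
  exists N, forall k, (N <= k)%N -> `|q ^+ k| * W < eps.
Proof.
move=> q1 W0 e0.
have W1 : 0 < W + 1 by lra.
have [N HN] := ev_of (cvg_expr q1) (divr_gt0 e0 W1).
exists N => k /HN /= h.
apply: le_lt_trans (_ : `|q ^+ k| * (W + 1) < _).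
  by apply: ler_wpM2l => //; lra.
by rewrite -ltr_pdivlMr.
Qed.

Lemma scalar_conv (R : realType) (x : nat -> R) r K : 0 < K < 2 ->
  (forall k, x k.+1 = x k + K * (r - x k)) -> (fun k => x k) @ \oo --> r.
Proof.
move=> /andP[K0 K2] Hx.
have cf : forall k, x k - r = (1 - K) ^+ k * (x 0%N - r).
  elim=> [|k IH]; first by rewrite expr0 mul1r.
  by rewrite Hx exprS -mulrA -IH; ring.
have q1 : `|1 - K| < 1 by rewrite ltr_norml; apply/andP; split; lra.
apply/cvgrPdist_lt => eps eps0.
have [N HN] := geo_small q1 (normr_ge0 (x 0%N - r)) eps0.
exists N => // k /= Hk.
rewrite distrC cf normrM; exact: HN.
Qed.
Section Cons.
Variables (R : realType) (n : nat) (e : rel 'I_n).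
Hypothesis esym : symmetric e.
Variables (a b : 'I_n -> R) (al : R).
Hypotheses (al0 : 0 < al) (al1 : al <= 1) (ha : forall i, al <= a i)
  (hb : forall i, al <= b i)
  (hab : forall i, a i + (degree e i)%:R * b i = 1).

Definition Rec (z : nat -> 'I_n -> R) :=
  forall t i, z t.+2 i = a i * z t.+1 i + b i * \sum_(j | e i j) z t j.

Lemma sum_const_e i (c : R) : \sum_(j | e i j) c = (degree e i)%:R * c.
Proof.
rewrite (eq_bigl (fun j => j \in [pred j | e i j])) //.
by rewrite sumr_const mulr_natl.
Qed.

Lemma rec_affine z c s : Rec z -> Rec (fun t i => c + s * z t i).
Proof.
move=> Hz t i /=; rewrite Hz big_split /= sum_const_e -mulr_sumr.
have h := hab i; move: h; set d := (degree e i)%:R => h.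
have -> : a i = 1 - d * b i by rewrite -h; ring.
ring.
Qed.

Definition NN (z : nat -> 'I_n -> R) t := forall i, 0 <= z t i /\ 0 <= z t.+1 i.

Lemma a_ge0 i : 0 <= a i. Proof. exact: le_trans (ltW al0) (ha i). Qed.
Lemma b_ge0 i : 0 <= b i. Proof. exact: le_trans (ltW al0) (hb i). Qed.

Lemma nn_step z t : Rec z -> NN z t -> NN z t.+1.
Proof.
move=> Hz H i; split; first by case: (H i).
rewrite Hz; apply: addr_ge0; apply: mulr_ge0; rewrite ?a_ge0 ?b_ge0 //.
  by case: (H i).
by apply: sumr_ge0 => j _; case: (H j).
Qed.

Lemma nn_plus z t s : Rec z -> NN z t -> NN z (t + s).
Proof.
move=> Hz H; elim: s => [|s IH]; first by rewrite addn0.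
by rewrite addnS; apply: nn_step.
Qed.

Lemma self_lb z t i : Rec z -> NN z t -> al * z t.+1 i <= z t.+2 i.
Proof.
move=> Hz H; rewrite Hz.
have [_ h1] := H i.
apply: le_trans (_ : a i * z t.+1 i <= _).
  by apply: ler_wpM2r.
rewrite lerDl; apply: mulr_ge0; first exact: b_ge0.
by apply: sumr_ge0 => j _; case: (H j).
Qed.

Lemma nb_lb z t i j : Rec z -> NN z t -> e i j -> al * z t j <= z t.+2 i.
Proof.
move=> Hz H eij; rewrite Hz.
have [h0 _] := H j.
apply: le_trans (_ : b i * \sum_(j | e i j) z t j <= _); last first.
  rewrite lerDr; apply: mulr_ge0; first exact: a_ge0.
  by case: (H i).
apply: le_trans (_ : b i * z t j <= _); first by apply: ler_wpM2r.
apply: ler_wpM2l; first exact: b_ge0.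
rewrite (bigD1 j) //= lerDl.
by apply: sumr_ge0 => k _; case: (H k).
Qed.

Lemma prop_lb z : Rec z -> forall p j0 t, path e j0 p -> NN z t ->
  forall s, al ^+ (2 * size p + s) * z t.+1 j0
            <= z (t.+1 + (2 * size p + s))%N (last j0 p).
Proof.
move=> Hz; elim=> [|j1 p IH] j0 t /=.
  move=> _ H s; rewrite muln0 add0n.
  elim: s => [|s IHs]; first by rewrite expr0 mul1r addn0.
  rewrite exprS -mulrA.
  apply: le_trans (_ : al * z (t.+1 + s)%N j0 <= _).
    by apply: ler_wpM2l => //; apply: ltW.
  have -> : (t.+1 + s.+1 = (t + s).+2)%N by lia.
  have -> : (t.+1 + s = (t + s).+1)%N by lia.
  by apply: self_lb => //; apply: nn_plus.
move=> /andP[e01 pp] H s.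
have H2 : NN z t.+2 by have := @nn_plus z t 2 Hz H; rewrite addn2.
have := IH j1 t.+2 pp H2 s.
have -> : (t.+3 + (2 * size p + s) = t.+1 + (2 * (size p).+1 + s))%N by lia.
move=> Hle; apply: le_trans Hle.
have Hn : al * z t.+1 j0 <= z t.+3 j1.
  by apply: nb_lb => //; [apply: nn_step | rewrite esym].
have Z0 : 0 <= z t.+1 j0 by case: (H j0).
have -> : (2 * (size p).+1 + s = (2 * size p + s) + 2)%N by lia.
rewrite exprD -mulrA; apply: ler_wpM2l; first by apply: exprn_ge0; apply: ltW.
apply: le_trans Hn.
rewrite expr2 -mulrA; apply: ler_pM => //.
- exact: ltW.
- by apply: mulr_ge0 => //; apply: ltW.
- by rewrite -[X in _ <= X]mul1r; apply: ler_wpM2r.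
Qed.

Lemma LB z t i0 : Rec z -> NN z t -> (forall j, connect e i0 j) ->
  forall j, al ^+ (2 * n + 1) * z t.+1 i0 <= z (t + 2 * n)%N j /\
            al ^+ (2 * n + 1) * z t.+1 i0 <= z (t + 2 * n).+1 j.
Proof.
move=> Hz H Hc j.
have /connectP [p pp ->] := Hc j.
case: (shortenP pp) => p' pp' up' _.
have hs : (size (i0 :: p') <= n)%N.
  by rewrite -(card_uniqP up') -[X in (_ <= X)%N]card_ord max_card.
have Z0 : 0 <= z t.+1 i0 by case: (H i0).
have key : forall s, (s <= 1)%N ->
    al ^+ (2 * n + 1) * z t.+1 i0 <= z (t + 2 * n + s)%N (last i0 p').
  move=> s s1.
  have := prop_lb Hz pp' H (2 * n - 1 - 2 * size p' + s).
  rewrite /= in hs.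
  set k := size p' in hs *.
  have -> : (t.+1 + (2 * size p' + (2 * n - 1 - 2 * size p' + s))
             = t + 2 * n + s)%N.
  lia.
  apply: le_trans; apply: ler_wpM2r => //.
  apply: ler_wiXn2l => //; first exact: ltW.
  lia.
split; first by have := key 0%N isT; rewrite addn0.
by have := key 1%N isT; rewrite -[(t + 2 * n).+1]addn1.
Qed.

Definition Box (z : nat -> 'I_n -> R) t (m M : R) :=
  forall i, (m <= z t i <= M) /\ (m <= z t.+1 i <= M).

Lemma box_plus z t m M s : Rec z -> Box z t m M -> Box z (t + s)%N m M.
Proof.
move=> Hz B.
have H1 : NN (fun t i => - m + 1 * z t i) t.
  by move=> i; have [/andP[? ?] /andP[? ?]] := B i; split; lra.
have H2 : NN (fun t i => M + (-1) * z t i) t.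
  by move=> i; have [/andP[? ?] /andP[? ?]] := B i; split; lra.
have := nn_plus s (rec_affine (-m) 1 Hz) H1.
have := nn_plus s (rec_affine M (-1) Hz) H2.
move=> N2 N1 i; have [/= ? ?] := N1 i; have [/= ? ?] := N2 i.
split; apply/andP; split; lra.
Qed.

Lemma contract z t m M i0 : Rec z -> (forall j, connect e i0 j) ->
  Box z t m M -> exists m' M', Box z (t + 2 * n)%N m' M' /\
    M' - m' <= (1 - al ^+ (2 * n + 1) / 2) * (M - m).
Proof.
move=> Hz Hc B.
set q := al ^+ (2 * n + 1).
have q0 : 0 <= q by apply: exprn_ge0; apply: ltW.
have B' := box_plus (2 * n) Hz B.
have H1 : NN (fun t i => - m + 1 * z t i) t.
  by move=> i; have [/andP[? ?] /andP[? ?]] := B i; split; lra.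
have H2 : NN (fun t i => M + (-1) * z t i) t.
  by move=> i; have [/andP[? ?] /andP[? ?]] := B i; split; lra.
have [hi0 _] := B i0; move: hi0 => /andP[hm hM].
case: (lerP ((M + m) / 2) (z t.+1 i0)) => hc.
  exists (m + q / 2 * (M - m)), M; split; last by lra.
  move=> j; have [L1 L2] := LB (rec_affine (-m) 1 Hz) H1 Hc j.
  have [/andP[? ?] /andP[? ?]] := B' j.
  move: L1 L2 => /=.
  have : q * ((M - m) / 2) <= q * (- m + 1 * z t.+1 i0).
    by apply: ler_wpM2l => //; lra.
  move=> h L1 L2; rewrite -/q in L1 L2; split; apply/andP; split; lra.
exists m, (M - q / 2 * (M - m)); split; last by lra.
move=> j; have [L1 L2] := LB (rec_affine M (-1) Hz) H2 Hc j.
have [/andP[? ?] /andP[? ?]] := B' j.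
move: L1 L2 => /=.
have : q * ((M - m) / 2) <= q * (M + (-1) * z t.+1 i0).
  by apply: ler_wpM2l => //; lra.
move=> h L1 L2; rewrite -/q in L1 L2; split; apply/andP; split; lra.
Qed.


Lemma iter_box z i0 m0 M0 : Rec z -> (forall j, connect e i0 j) ->
  Box z 0 m0 M0 -> forall N, exists m M, Box z (N * (2 * n))%N m M /\
    M - m <= (1 - al ^+ (2 * n + 1) / 2) ^+ N * (M0 - m0).
Proof.
move=> Hz Hc B0; elim=> [|N [m [M [BN HN]]]].
  by exists m0, M0; rewrite mul0n expr0 mul1r.
have [m' [M' [B' H']]] := contract Hz Hc BN.
exists m', M'; split; first by rewrite mulSn addnC.
apply: le_trans H' _; rewrite exprS -mulrA; apply: ler_wpM2l => //.
have : al ^+ (2 * n + 1) <= 1 by apply: exprn_ile1 => //; apply: ltW.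
lra.
Qed.

Lemma le_sum1 (f : 'I_n -> R) i : (forall j, 0 <= f j) -> f i <= \sum_j f j.
Proof.
by move=> H; rewrite (bigD1 i) //= lerDl; apply: sumr_ge0.
Qed.

Lemma consensus z i0 : Rec z -> (forall j, connect e i0 j) ->
  forall i j, (fun k => `|z k.+1 i - z k.+1 j|) @ \oo --> 0.
Proof.
move=> Hz Hc i j; apply: cvg0_of => eps eps0.
set B := \sum_i0 (`|z 0%N i0| + `|z 1%N i0|).
have B0 : Box z 0 (- B) B.
  move=> k.
  have h : `|z 0%N k| + `|z 1%N k| <= B :=
    @le_sum1 (fun i => `|z 0%N i| + `|z 1%N i|) k
      (fun l => addr_ge0 (normr_ge0 _) (normr_ge0 _)).
  have a1 : `|z 0%N k| <= B by apply: le_trans h; rewrite lerDl.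
  have a2 : `|z 1%N k| <= B by apply: le_trans h; rewrite lerDr.
  by move: a1 a2; rewrite !ler_norml => /andP[? ?] /andP[? ?]; split; apply/andP.
have Bp : 0 <= B by apply: sumr_ge0 => l _; apply: addr_ge0.
set q := 1 - al ^+ (2 * n + 1) / 2.
have qb : 0 <= q < 1.
  have : al ^+ (2 * n + 1) <= 1 by apply: exprn_ile1 => //; apply: ltW.
  have : 0 < al ^+ (2 * n + 1) by apply: exprn_gt0.
  rewrite /q; move=> *; apply/andP; split; lra.
have [qa qb1] := andP qb.
have q1 : `|q| < 1 by rewrite ger0_norm.
have Wp : 0 <= B - - B by lra.
have [N HN] := geo_small q1 Wp eps0.
have [m [M [BN HM]]] := iter_box Hz Hc B0 N.
exists (N * (2 * n))%N => k Hk.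
have := box_plus (k - N * (2 * n)) Hz BN; rewrite subnKC // => Bk.
have [_ /andP[h1 h2]] := Bk i; have [_ /andP[h3 h4]] := Bk j.
apply: le_lt_trans (HN N (leqnn N)).
rewrite normr_id [`|q ^+ N|]ger0_norm; last exact: exprn_ge0.
apply: le_trans HM; rewrite ler_norml; apply/andP; split; lra.
Qed.

End Cons.

Theorem theorem1 (R : realType) (n : nat) (e : rel 'I_n)
  (xwref xUref : R) (Kw KP KU : 'I_n -> R)
  (mP Pmax : 'I_n -> R)
  (xw xP xU : nat -> 'I_n -> R) (xPm1 : 'I_n -> R) (P : nat -> 'I_n -> R) :
  undirected_graph e -> connected_graph e ->
  (forall i, 0 < mP i) -> (forall i, 0 < Pmax i) ->
  (forall i j, mP i * Pmax i = mP j * Pmax j) ->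
  (forall k i, xP k i = mP i * P k i) ->
  (forall i, 0 < Kw i < 2) -> (forall i, 0 < KU i < 2) ->
  (forall i, 0 < (degree e i)%:R * KP i < 1) ->
  (forall k i, xw k.+1 i = xw k i + Kw i * (xwref - xw k i)) ->
  (forall k i, xP k.+1 i =
     xP k i + KP i * \sum_(j | e i j) (xP_prev xPm1 xP k j - xP k i)) ->
  (forall k i, xU k.+1 i = xU k i + KU i * (xUref - xU k i)) ->
  (forall i, (fun k => xw k i) @ \oo --> xwref) /\
  (forall i, (fun k => xU k i) @ \oo --> xUref) /\
  (forall i j, (fun k => `|P k i / Pmax i - P k j / Pmax j|) @ \oo --> 0) /\
  (forall i j, (fun k => `|xP k i - xP k j|) @ \oo --> 0).
Proof.
move=> [esym _] conn mP0 Pm0 hC hxP hKw hKU hKP hw hP hU.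
split; first by move=> i; apply: (scalar_conv (hKw i)) => k; exact: hw.
split; first by move=> i; apply: (scalar_conv (hKU i)) => k; exact: hU.
have cons : forall i j, (fun k => `|xP k i - xP k j|) @ \oo --> 0.
  move=> i j.
  pose a := fun l => 1 - (degree e l)%:R * KP l.
  pose b := KP.
  have hb0 : forall l, 0 < b l.
    move=> l; have /andP[h1 h2] := hKP l.
    case: (posnP (degree e l)) => [d0 | dp].
      by rewrite d0 mul0r ltxx in h1.
    by rewrite pmulr_rgt0 ?ltr0n in h1.
  have ha0 : forall l, 0 < a l.
    by move=> l; have /andP[h1 h2] := hKP l; rewrite /a; lra.
  pose al := \big[Order.min/1]_(l < n) Order.min (a l) (b l).
  have almin : forall l, al <= Order.min (a l) (b l).
    by move=> l; rewrite /al (bigD1 l) //= ge_min lexx.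
  have ha : forall l, al <= a l.
    by move=> l; apply: le_trans (almin l) _; rewrite ge_min lexx.
  have hb : forall l, al <= b l.
    by move=> l; apply: le_trans (almin l) _; rewrite ge_min lexx orbT.
  have al0 : 0 < al.
    rewrite /al; apply: (big_ind (fun x => 0 < x)) => //.
      by move=> x y hx hy; rewrite lt_min hx hy.
    by move=> l _; rewrite lt_min ha0 hb0.
  have al1 : al <= 1.
    apply: le_trans (ha i) _; have /andP[h1 h2] := hKP i; rewrite /a; lra.
  have hab : forall l, a l + (degree e l)%:R * b l = 1.
    by move=> l; rewrite /a /b; ring.
  pose z := xP_prev xPm1 xP.
  have Hz : Rec e a b z.
    move=> t l; rewrite /z /= hP sumrB sum_const_e /a /b; ring.
  have := consensus esym al0 al1 ha hb hab Hz (conn i) i j.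
  by [].
split; last exact: cons.
move=> i j.
set C := mP i * Pmax i.
have C0 : 0 < C by apply: mulr_gt0.
have eq : forall k, `|P k i / Pmax i - P k j / Pmax j| = `|xP k i - xP k j| / C.
  move=> k.
  have mi : mP i != 0 by apply: lt0r_neq0.
  have mj : mP j != 0 by apply: lt0r_neq0.
  have pi : Pmax i != 0 by apply: lt0r_neq0.
  have pj : Pmax j != 0 by apply: lt0r_neq0.
  have e1 : P k i / Pmax i = mP i * P k i / C.
    by rewrite /C; field; rewrite pi mi.
  have e2 : P k j / Pmax j = mP j * P k j / C.
    by rewrite /C (hC i j); field; rewrite pj mj.
  rewrite e1 e2 -mulrBl normrM (ger0_norm (_ : 0 <= C^-1)) ?invr_ge0 ?ltW //.
  by rewrite -!hxP.
apply: cvg0_of => eps e0.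
have [N HN] := ev_of (cons i j) (mulr_gt0 e0 C0).
exists N => k hk; rewrite normr_id eq ltr_pdivrMr //.
by have := HN k hk; rewrite normr_id.
Qed.
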